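(* Let $q$ be a prime power and use the setting of the context. Let $\mathcal Q\in\mathcal H$ be a hyperbolic quadric not containing the point $T$, and let $\mathcal R$ be one of its two reguli. Then no two distinct lines of $\mathcal R$ lie in the same $C$-orbit.
   Context: Points of ${\rm PG}(3,q)$ are $\langle(x_1,x_2,x_3,x_4)\rangle$; $\pi$ is the plane $x_4=0$ and $T=\langle(0,0,0,1)\rangle$. Let $\sigma\in{\rm GL}(3,q)$ be a Singer cycle (element of order $q^3-1$) and let $C$ be the group of projectivities induced by the matrices $\begin{pmatrix} A&0\\0&1\end{pmatrix}$, $A\in\langle\sigma\rangle$ (order $q^3-1$). The group $C$ induces on $\pi$ a Singer cyclic group $C_1$ of order $q^2+q+1$. Embedding $\pi$ in ${\rm PG}(2,q^3)$, $C_1$ fixes a unique triangle $\Delta$ with vertices outside ${\rm PG}(2,q)$; the circumscribed bundle $\mathcal B$ is the set of non-degenerate conics of $\pi$ whose extensions over ${\rm GF}(q^3)$ contain the vertices of $\Delta$. $\mathcal H$ is the set of hyperbolic quadrics of ${\rm PG}(3,q)$ meeting $\pi$ in a conic of $\mathcal B$. A regulus of a hyperbolic quadric is one of its two families of $q+1$ pairwise skew lines. *)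

(* Defs.v *)
From HB Require Import structures.
From mathcomp Require Import all_boot all_order all_algebra all_field.
Set Implicit Arguments. Unset Strict Implicit. Unset Printing Implicit Defensive.
Import GRing.Theory.
Local Open Scope ring_scope.

(* Conventions: vectors are row vectors 'rV_n; a matrix g acts on points of
   PG(n-1, K) as a column-vector projectivity <x> |-> <g x>, i.e. on row
   vectors as x |-> x *m g^T.  A subspace (line) is the row space of a matrix. *)

Definition qf (K : nzRingType) (n : nat) (A : 'M[K]_n) (x : 'rV[K]_n) : K :=
  (x *m A *m x^T) 0 0.

(* A and B define the same quadratic polynomial (identical coefficients). *)
Definition qf_equiv (K : nzRingType) (n : nat) (A B : 'M[K]_n) : Prop :=
  A + A^T = B + B^T /\ (forall i, A i i = B i i).

(* Canonical forms: x0 x1 + x2 x3 (hyperbolic quadric), x0 x2 - x1^2 (conic). *)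
Definition hypE (K : nzRingType) : 'M[K]_4 :=
  delta_mx (0 : 'I_4) (1 : 'I_4) + delta_mx (2 : 'I_4) (3 : 'I_4).
Definition conicE (K : nzRingType) : 'M[K]_3 :=
  delta_mx (0 : 'I_3) (2 : 'I_3) - delta_mx (1 : 'I_3) (1 : 'I_3).

Definition hyperbolic_form (K : fieldType) (A : 'M[K]_4) : Prop :=
  exists (M : 'M[K]_4) (c : K),
    [/\ M \in unitmx, c != 0 & qf_equiv A (c *: (M *m hypE K *m M^T))].

Definition nondeg_conic_form (K : fieldType) (B : 'M[K]_3) : Prop :=
  exists (N : 'M[K]_3) (c : K),
    [/\ N \in unitmx, c != 0 & qf_equiv B (c *: (N *m conicE K *m N^T))].

Definition singer_cycle (F : finFieldType) (s : 'M[F]_3) : Prop :=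
  [/\ s \in unitmx, s ^+ (#|F| ^ 3 - 1) = 1
    & forall k, (0 < k < #|F| ^ 3 - 1)%N -> s ^+ k != 1].

Definition ext4 (K : nzRingType) (A : 'M[K]_3) : 'M[K]_4 :=
  block_mx A 0 0 (1%:M : 'M[K]_1).

Definition restr_pi (K : nzRingType) (A : 'M[K]_4) : 'M[K]_3 :=
  \matrix_(i < 3, j < 3) A (widen_ord (leqnSn 3) i) (widen_ord (leqnSn 3) j).

Definition ptT (K : nzRingType) : 'rV[K]_4 := \row_(i < 4) (i == ord_max)%:R.

Definition extL (F : fieldType) (L : fieldExtType F) (m n : nat)
  (A : 'M[F]_(m, n)) : 'M[L]_(m, n) := map_mx (fun a : F => a%:A) A.

(* <v> (v over L) is a point of PG(2,L) fixed by the projectivity induced by s,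
   i.e. a vertex of the triangle Delta fixed by C_1 = <s>. *)
Definition fixed_pt (F : fieldType) (L : fieldExtType F) (s : 'M[F]_3)
  (v : 'rV[L]_3) : Prop :=
  v != 0 /\ exists lam : L, v *m (extL _ s)^T = lam *: v.

Definition in_bundle (F : fieldType) (L : fieldExtType F) (s : 'M[F]_3)
  (B : 'M[F]_3) : Prop :=
  nondeg_conic_form B /\
  (forall v : 'rV[L]_3, @fixed_pt F L s v -> qf (extL L B) v = 0).

Definition in_H (F : fieldType) (L : fieldExtType F) (s : 'M[F]_3)
  (A : 'M[F]_4) : Prop :=
  hyperbolic_form A /\ in_bundle L s (restr_pi A).

Definition is_line (K : fieldType) (l : 'M[K]_(2, 4)) : Prop := \rank l = 2%N.

Definition line_on (K : fieldType) (A : 'M[K]_4) (l : 'M[K]_(2, 4)) : Prop :=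
  forall v : 'rV[K]_4, (v <= l)%MS -> qf A v = 0.

Definition skew (K : fieldType) (l1 l2 : 'M[K]_(2, 4)) : Prop :=
  \rank (l1 :&: l2)%MS = 0%N.

Definition regulus (F : finFieldType) (A : 'M[F]_4)
  (R : 'I_(#|F|.+1) -> 'M[F]_(2, 4)) : Prop :=
  (forall i, is_line (R i) /\ line_on A (R i)) /\
  (forall i j, i != j -> skew (R i) (R j)).

Definition same_C_orbit (K : fieldType) (s : 'M[K]_3) (l1 l2 : 'M[K]_(2, 4)) : Prop :=
  exists k : nat, (l1 *m (ext4 (s ^+ k))^T == l2)%MS.

(* Main.v *)
Require Import Defs.
From HB Require Import structures.
From mathcomp Require Import all_boot all_order all_algebra all_field.
From mathcomp Require Import ring.
Set Implicit Arguments. Unset Strict Implicit. Unset Printing Implicit Defensive.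
Import GRing.Theory.
Local Open Scope ring_scope.

Section Gen.
Variable K : comNzRingType.

Lemma sum3 (F : 'I_3 -> K) : \sum_i F i = F 0 + F 1 + F 2.
Proof.
rewrite !big_ord_recr big_ord0 /= add0r.
by congr (_ + _ + _); congr F; apply: val_inj.
Qed.

Lemma sum4 (F : 'I_4 -> K) : \sum_i F i = F 0 + F 1 + F 2 + F 3.
Proof.
rewrite !big_ord_recr big_ord0 /= add0r.
by congr (_ + _ + _ + _); congr F; apply: val_inj.
Qed.

Definition Q4 (a : 'M[K]_4) (x0 x1 x2 x3 : K) :=
  x0 * a 0 0 * x0 + x0 * a 0 1 * x1 + x0 * a 0 2 * x2 + x0 * a 0 3 * x3 +
  x1 * a 1 0 * x0 + x1 * a 1 1 * x1 + x1 * a 1 2 * x2 + x1 * a 1 3 * x3 +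
  x2 * a 2 0 * x0 + x2 * a 2 1 * x1 + x2 * a 2 2 * x2 + x2 * a 2 3 * x3 +
  x3 * a 3 0 * x0 + x3 * a 3 1 * x1 + x3 * a 3 2 * x2 + x3 * a 3 3 * x3.

Lemma qfE4 (a : 'M[K]_4) (x : 'rV[K]_4) :
  qf a x = Q4 a (x 0 0) (x 0 1) (x 0 2) (x 0 3).
Proof.
rewrite /qf !mxE sum4 !mxE !sum4 /Q4; ring.
Qed.

Lemma rowmx_at (x : 'rV[K]_3) (c : 'rV[K]_1) :
  [/\ (row_mx x c : 'rV_4) 0 0 = x 0 0, (row_mx x c : 'rV_4) 0 1 = x 0 1,
      (row_mx x c : 'rV_4) 0 2 = x 0 2 & (row_mx x c : 'rV_4) 0 3 = c 0 0].
Proof.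
split.
- rewrite (_ : (0 : 'I_4) = lshift 1 (0 : 'I_3)); [exact: (row_mxEl x c 0 0)| by apply/eqP].
- rewrite (_ : (1 : 'I_4) = lshift 1 (1 : 'I_3)); [exact: (row_mxEl x c 0 1)| by apply/eqP].
- rewrite (_ : (2 : 'I_4) = lshift 1 (2 : 'I_3)); [exact: (row_mxEl x c 0 2)| by apply/eqP].
- rewrite (_ : (3 : 'I_4) = rshift 3 (0 : 'I_1)); [exact: (row_mxEr x c 0 0)| by apply/eqP].
Qed.

Lemma qf_rowmx (a : 'M[K]_4) (x : 'rV[K]_3) (c : 'rV[K]_1) :
  qf a (row_mx x c) = Q4 a (x 0 0) (x 0 1) (x 0 2) (c 0 0).
Proof. by case: (rowmx_at x c) => e0 e1 e2 e3; rewrite qfE4 e0 e1 e2 e3. Qed.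

Definition det3 (a1 a2 a3 b1 b2 b3 c1 c2 c3 : K) :=
  a1 * (b2 * c3 - b3 * c2) - a2 * (b1 * c3 - b3 * c1) + a3 * (b1 * c2 - b2 * c1).

Lemma det33 (A : 'M[K]_3) :
  \det A = det3 (A 0 0) (A 0 1) (A 0 2) (A 1 0) (A 1 1) (A 1 2) (A 2 0) (A 2 1) (A 2 2).
Proof.
pose g (i j : nat) := A (inord i) (inord j).
have -> : A = \matrix_(i, j) g i j by apply/matrixP => i j; rewrite mxE /g !inord_val.
rewrite (expand_det_row _ 0) sum3 /cofactor.
rewrite !(expand_det_row _ 0) !big_ord_recr big_ord0 /= /cofactor !det_mx11 !mxE /=.
rewrite !big_ord0 /bump /=.
change (1 %% 3)%N with 1%N; change ((1 + 1) %% 3)%N with 2%N.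
rewrite /det3 /= ?add0n ?addn0 ?expr0 ?expr1; ring.
Qed.
Lemma core_id (a : 'M[K]_4) (p1 p2 p3 u1 u2 u3 m1 m2 m3 : K) :
  a 0 0 = 0 -> a 1 1 = 0 -> a 2 2 = 0 ->
  Q4 a p1 p2 p3 0 = 0 -> Q4 a u1 u2 u3 1 = 0 ->
  Q4 a (p1+u1) (p2+u2) (p3+u3) 1 = 0 ->
  Q4 a (p1 * m1) (p2 * m2) (p3 * m3) 0 = 0 -> Q4 a (u1 * m1) (u2 * m2) (u3 * m3) 1 = 0 ->
  Q4 a (p1 * m1+u1 * m1) (p2 * m2+u2 * m2) (p3 * m3+u3 * m3) 1 = 0 ->
  p1 * p2 * p3  *  det3 p1 p2 p3 (p1 * m1) (p2 * m2) (p3 * m3) (u1 * m1-u1) (u2 * m2-u2) (u3 * m3-u3)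
    *  a 3 3 = 0.
Proof.
move=> h0 h1 h2 E1 E2 E3 E4 E5 E6.
set e1 := Q4 a p1 p2 p3 0 in E1. set e2 := Q4 a u1 u2 u3 1 in E2.
set e3 := Q4 a (p1+u1) (p2+u2) (p3+u3) 1 in E3.
set e4 := Q4 a (p1 * m1) (p2 * m2) (p3 * m3) 0 in E4.
set e5 := Q4 a (u1 * m1) (u2 * m2) (u3 * m3) 1 in E5.
set e6 := Q4 a (p1 * m1+u1 * m1) (p2 * m2+u2 * m2) (p3 * m3+u3 * m3) 1 in E6.
pose D := det3 p1 p2 p3 (p1 * m1) (p2 * m2) (p3 * m3) (u1 * m1-u1) (u2 * m2-u2) (u3 * m3-u3).
pose r1 := det3 u1 u2 u3 (p1 * m1) (p2 * m2) (p3 * m3) (u1 * m1-u1) (u2 * m2-u2) (u3 * m3-u3).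
pose r2 := det3 p1 p2 p3 u1 u2 u3 (u1 * m1-u1) (u2 * m2-u2) (u3 * m3-u3).
pose r3 := det3 p1 p2 p3 (p1 * m1) (p2 * m2) (p3 * m3) u1 u2 u3.
pose Acoef := (- p2 * p3 * p3 * u1 * u1 * u2 * m2 * m3 + p2 * p3 * p3 * u1 * u1 * u2 * m1 * m2 * m3 + p2 * p2 * p3 * u1 * u1 * u3 * m2 * m3 - p2 * p2 * p3 * u1 * u1 * u3 * m1 * m2 * m3 + p1 * p3 * p3 * u1 * u2 * u2 * m1 * m3 - p1 * p3 * p3 * u1 * u2 * u2 * m1 * m2 * m3 - p1 * p2 * p2 * u1 * u3 * u3 * m1 * m2 + p1 * p2 * p2 * u1 * u3 * u3 * m1 * m2 * m3 - p1 * p1 * p3 * u2 * u2 * u3 * m1 * m3 + p1 * p1 * p3 * u2 * u2 * u3 * m1 * m2 * m3 + p1 * p1 * p2 * u2 * u3 * u3 * m1 * m2 - p1 * p1 * p2 * u2 * u3 * u3 * m1 * m2 * m3).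
pose Bcoef := (p2 * p3 * p3 * u1 * u1 * u2 - p2 * p3 * p3 * u1 * u1 * u2 * m1 - p2 * p2 * p3 * u1 * u1 * u3 + p2 * p2 * p3 * u1 * u1 * u3 * m1 - p1 * p3 * p3 * u1 * u2 * u2 + p1 * p3 * p3 * u1 * u2 * u2 * m2 + p1 * p2 * p2 * u1 * u3 * u3 - p1 * p2 * p2 * u1 * u3 * u3 * m3 + p1 * p1 * p3 * u2 * u2 * u3 - p1 * p1 * p3 * u2 * u2 * u3 * m2 - p1 * p1 * p2 * u2 * u3 * u3 + p1 * p1 * p2 * u2 * u3 * u3 * m3).
have key : p1 * p2 * p3  *  D  *  a 3 3 =
  - (p1 * p2 * p3 * (r1 * (e3-e1-e2) + r2 * (e6-e4-e5) - (D+r3) * e2 + r3 * e5) - Acoef * e1 - Bcoef * e4).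
  rewrite /e1 /e2 /e3 /e4 /e5 /e6 /Q4 h0 h1 h2 /D /r1 /r2 /r3 /det3 /Acoef /Bcoef.
  ring.
by rewrite key E1 E2 E3 E4 E5 E6; ring.
Qed.
End Gen.


Lemma trX (K : comNzRingType) (A : 'M[K]_3) k : (A ^+ k)^T = (A^T) ^+ k.
Proof.
elim: k => [|k IH]; first by rewrite !expr0 trmx1.
by rewrite exprS exprSr -mulmxE trmx_mul IH mulmxE.
Qed.

Section Singer.
Variables (F : finFieldType) (s : 'M[F]_3) (hs : singer_cycle s).
Local Notation N := (#|F| ^ 3 - 1)%N.
Local Notation t := (s^T).

Lemma N_gt0 : (0 < N)%N.
Proof.
have h2 : (1 < #|F|)%N by apply: finNzRing_gt1.
rewrite subn_gt0 -(exp1n 3) ltn_exp2r //.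
Qed.

Lemma t_unit : t \in unitmx.
Proof. by case: hs => su _ _; rewrite unitmx_tr. Qed.

Lemma tN : t ^+ N = 1.
Proof. by case: hs => _ h _; rewrite -trX h trmx1. Qed.

Lemma t_neq1 k : (0 < k < N)%N -> t ^+ k != 1.
Proof.
case: hs => _ _ h /h; apply: contra => /eqP e.
by rewrite -(trmxK (s ^+ k)) trX e trmx1.
Qed.

Lemma tX_unit k : t ^+ k \is a GRing.unit.
Proof. by apply: unitrX; exact: t_unit. Qed.

Lemma tX_inj (i j : 'I_N) : t ^+ i = t ^+ j -> i = j.
Proof.
wlog lij : i j / (i <= j)%N.
  move=> H e; case: (leqP i j) => [/H|/ltnW /H]; first exact.
  by move=> H2; symmetry; apply: H2.
move=> e; apply/val_inj/eqP; rewrite eqn_leq lij /=.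
rewrite leqNgt; apply/negP => ltij.
have : t ^+ (j - i) == 1.
  have e2 : t ^+ i * t ^+ (j - i) = t ^+ i * 1 by rewrite -exprD subnKC // mulr1 e.
  by rewrite (mulrI (tX_unit i) e2).
by apply/negP/t_neq1; rewrite subn_gt0 ltij /= (leq_ltn_trans (leq_subr _ _)).
Qed.

Definition fsp (c : 'rV[F]_3) : 'M[F]_3 := \sum_(i < 3) c 0 i *: t ^+ i.

Lemma fsp_horner (c : 'rV[F]_3) : horner_mx t (rVpoly c) = fsp c.
Proof.
rewrite [rVpoly c]poly_def linear_sum; apply: eq_bigr => i _.
by rewrite valK /= linearZ rmorphXn /= horner_mx_X.
Qed.

Lemma pow_in_span k : exists c, fsp c = t ^+ k.
Proof.
pose cp := char_poly t.
have cp0 : cp != 0 by rewrite -size_poly_eq0 size_char_poly.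
pose r := ('X^k %% cp).
have sr : (size r <= 3)%N.
  by rewrite -ltnS -(size_char_poly t) ltn_modp.
exists (poly_rV r); rewrite -fsp_horner poly_rV_K //.
have -> : t ^+ k = horner_mx t ('X^k) by rewrite rmorphXn /= horner_mx_X.
by rewrite [in RHS](divp_eq 'X^k cp) rmorphD rmorphM /= Cayley_Hamilton mulr0 add0r.
Qed.

Definition Pw := [set t ^+ (val i) | i : 'I_N].
Definition Sp := fsp @: [set: 'rV[F]_3].

Lemma card_Pw : #|Pw| = N.
Proof. by rewrite card_imset ?card_ord // => i j /tX_inj. Qed.

Lemma fsp0 : fsp 0 = 0.
Proof. by rewrite /fsp big1 // => i _; rewrite mxE scale0r. Qed.

Lemma Pw_sub : 0 |: Pw \subset Sp.
Proof.
apply/subsetP => x; rewrite in_setU1 => /orP [/eqP -> | /imsetP [i _ ->]].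
  by rewrite -fsp0; apply: imset_f; rewrite inE.
by case: (pow_in_span i) => c <-; apply: imset_f; rewrite inE.
Qed.

Lemma zero_notin : 0 \notin Pw.
Proof.
apply/imsetP => -[i _ e]; have := tX_unit i; rewrite -e.
by rewrite unitr0.
Qed.

Lemma q3E : (#|F| ^ 3)%N = N.+1.
Proof. by move: N_gt0; case: (#|F| ^ 3)%N => [|n] //= _; rewrite subSS subn0. Qed.

Lemma card_Sp : #|Sp| = (#|F| ^ 3)%N.
Proof.
apply/eqP; rewrite eqn_leq; apply/andP; split.
  by rewrite (leq_trans (leq_imset_card _ _)) // cardsT card_mx mul1n.
rewrite q3E -card_Pw -[(#|Pw|).+1]/(true + #|Pw|)%N -zero_notin -cardsU1.
exact: subset_leq_card Pw_sub.
Qed.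

Lemma fsp_inj : injective fsp.
Proof.
have /imset_injP H : #|Sp| == #|[set: 'rV[F]_3]|.
  by rewrite card_Sp cardsT card_mx mul1n.
by move=> x y e; apply: H; rewrite ?inE.
Qed.

Lemma Sp_eq : Sp = 0 |: Pw.
Proof.
apply/esym/eqP; rewrite eqEcard Pw_sub /= cardsU1 zero_notin card_Pw card_Sp.
by rewrite add1n -q3E.
Qed.

Lemma fsp_unit c : c != 0 -> fsp c \in unitmx.
Proof.
move=> c0; have : fsp c \in Sp by apply: imset_f; rewrite inE.
rewrite Sp_eq in_setU1 => /orP [/eqP e| /imsetP [i _ ->]].
  by move: c0; rewrite -fsp0 in e; rewrite (fsp_inj e) eqxx.
exact: tX_unit.
Qed.

Definition Wm (p : 'rV[F]_3) : 'M[F]_3 := \matrix_(i < 3) (p *m t ^+ i).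

Lemma Wm_unit p : p != 0 -> Wm p \in unitmx.
Proof.
move=> p0; rewrite -row_free_unit; apply/negPn/negP => nf.
have : kermx (Wm p) != 0 by rewrite kermx_eq0.
case/rowV0Pn => w /sub_kermxP ew w0.
have : w *m Wm p = p *m fsp w.
  rewrite mulmx_sum_row /fsp mulmx_sumr; apply: eq_bigr => j _.
  by rewrite rowK scalemxAr.
rewrite ew => /esym e.
have p00 : p = 0 by rewrite -(mulmxK (fsp_unit w0) p) e mul0mx.
by move: p0; rewrite p00 eqxx.
Qed.
End Singer.


Section Diag.
Variables (F : finFieldType) (L : fieldExtType F) (hL : \dim {: L} = 3%N).
Variables (s : 'M[F]_3) (hs : singer_cycle s).
Local Notation N := (#|F| ^ 3 - 1)%N.
Local Notation t := (s^T).
Local Notation phi := (in_alg L).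
Local Notation t' := (map_mx phi s^T).
Let finL := FinFieldExtType L.

Lemma cardL : #|finL| = (#|F| ^ 3)%N.
Proof.
rewrite -hL -(card_vspace (fullv : {vspace finvect_type L})).
by rewrite card_vspacef.
Qed.

Lemma genL : 'X^(#|F|^3) - 'X = \prod_(x <- enum finL) ('X - x%:P) :> {poly L}.
Proof. rewrite big_enum /= -cardL. exact: (finField_genPoly finL). Qed.

Lemma minpoly_div : mxminpoly t %| 'X^(#|F|^3) - 'X.
Proof.
apply: mxminpoly_min; rewrite rmorphB rmorphXn /= horner_mx_X.
by rewrite (q3E) exprS (tN hs) mulr1 subrr.
Qed.

Lemma diag_exists : exists P : 'M[L]_3, exists D : 'rV[L]_3,
  P \in unitmx /\ P *m t' = diag_mx D *m P.
Proof.
have : diagonalizable t'.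
  apply/diagonalizableP; exists (enum finL); first exact: enum_uniq.
  rewrite -genL mxminpoly_map.
  have -> : 'X^(#|F| ^ 3) - 'X = map_poly phi ('X^(#|F| ^ 3) - 'X).
    by rewrite rmorphB /= map_polyXn map_polyX.
  by rewrite dvdp_map minpoly_div.
case=> P Pu /diagonalizable_forPex [D hD].
exists P, D; split => //.
by apply: simmxPp => //; apply: stablemx_unit.
Qed.

Lemma map_tX k : map_mx phi (t ^+ k) = t' ^+ k.
Proof.
elim: k => [|k IH]; first by rewrite !expr0 map_mx1.
by rewrite !exprS -!mulmxE map_mxM IH.
Qed.

Lemma eig_nz (P : 'M[L]_3) (D : 'rV[L]_3) : P \in unitmx -> P *m t' = diag_mx D *m P ->
  forall p0 : 'rV[F]_3, p0 != 0 -> forall i, (map_mx phi p0 *m invmx P) 0 i != 0.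
Proof.
move=> Pu hP p0 p00 i; apply/negP => /eqP hz.
pose c := col i (invmx P).
have e : t' *m invmx P = invmx P *m diag_mx D.
  by rewrite -[LHS](mulKmx Pu) (mulmxA P) hP -(mulmxA (diag_mx D)) mulmxV // mulmx1.
have tc : t' *m c = D 0 i *: c.
  have dd : diag_mx D *m delta_mx i 0 = D 0 i *: delta_mx i 0 :> 'cV[L]_3.
    apply/matrixP => a b; rewrite mul_diag_mx !mxE.
    have [->|ne] := eqVneq a i; first by [].
    by rewrite !mulr0.
  by rewrite /c colE mulmxA e -mulmxA dd scalemxAr.
have tkc k : t' ^+ k *m c = D 0 i ^+ k *: c.
  elim: k => [|k IH]; first by rewrite !expr0 mul1mx scale1r.
  by rewrite exprS -mulmxE -mulmxA IH -scalemxAr tc scalerA mulrC exprS.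
have hz' : map_mx phi p0 *m c = 0.
  apply/matrixP => a b; rewrite !ord1 [RHS]mxE -hz !mxE; apply: eq_bigr => j _.
  by rewrite !mxE.
have hW : map_mx phi (Wm s p0) *m c = 0.
  apply/row_matrixP => k; rewrite row_mul row0 -map_row rowK map_mxM map_tX.
  by rewrite -mulmxA tkc -scalemxAr hz' scaler0.
have c0 : c = 0.
  have Wu : map_mx phi (Wm s p0) \in unitmx by rewrite map_unitmx Wm_unit.
  by rewrite -(mulKmx Wu c) hW mulmx0.
have : delta_mx i 0 = 0 :> 'cV[L]_3.
  by rewrite -(mulKVmx Pu (delta_mx i 0)) -colE -/c c0 mulmx0.
move/matrixP => /(_ i 0); rewrite !mxE !eqxx /= => /eqP.
by rewrite oner_eq0.
Qed.
End Diag.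


Lemma qf_conj (K : comNzRingType) n (B M : 'M[K]_n) y :
  qf (B *m M *m B^T) y = qf M (y *m B).
Proof. by rewrite /qf trmx_mul !mulmxA. Qed.

Lemma conj_diag (K : comNzRingType) n (B M : 'M[K]_n) i :
  (B *m M *m B^T) i i = qf M (row i B).
Proof.
rewrite /qf -row_mul !mxE; apply: eq_bigr => j _; rewrite !mxE.
congr (_ * _); apply: eq_bigr => a _; rewrite !mxE //.
Qed.

Lemma qf_row0 (K : comNzRingType) (M : 'M[K]_(3 + 1)) (v : 'rV[K]_3) :
  qf M (row_mx v 0) = qf (ulsubmx M) v.
Proof.
rewrite /qf -{1}(submxK M) mul_row_block !mul0mx !addr0 tr_row_mx trmx0.
by rewrite mul_row_col mulmx0 addr0.
Qed.

Lemma map_qf (K K' : comNzRingType) (f : {rmorphism K -> K'}) n (M : 'M[K]_n) x :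
  qf (map_mx f M) (map_mx f x) = f (qf M x).
Proof. by rewrite /qf map_trmx -!map_mxM mxE. Qed.

Lemma diag_mxX (K : comNzRingType) n (D : 'rV[K]_n) k :
  (diag_mx D) ^+ k = diag_mx (\row_i (D 0 i ^+ k)).
Proof.
case: n D => [|n] D.
  by apply/matrixP => i; case: i.
elim: k => [|k IH].
  rewrite expr0; apply/matrixP => i j; rewrite !mxE.
  by case: eqP => //; rewrite expr0.
rewrite exprS IH -mulmxE mul_diag_mx; apply/matrixP => i j; rewrite !mxE.
case: eqP => [->|]; last by rewrite !mulr0n mulr0.
by rewrite exprS.
Qed.

Lemma sum2 (K : comNzRingType) (F : 'I_2 -> K) : \sum_i F i = F 0 + F 1.
Proof.
rewrite !big_ord_recr big_ord0 /= add0r.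
by congr (_ + _); congr F; apply: val_inj.
Qed.

Lemma normalize2 (K : fieldType) (c : 'cV[K]_2) : c != 0 ->
  exists B : 'M[K]_2, B \in unitmx /\ B *m c = delta_mx 1 0.
Proof.
move=> c0.
have i2 (i : 'I_2) : i = 0 \/ i = 1.
  by case: i => [[|[|?]] Hi]; [left|right|]; try apply: val_inj.
have j1 (j : 'I_1) : j = 0 by apply: ord1.
have cE : forall i j, c i j = c (if i == 0 then 0 else 1) 0.
  by move=> i j; rewrite (j1 j); case: (i2 i) => ->.
have [x1 | x1] := eqVneq (c 1 0) 0.
  have x0 : c 0 0 != 0.
    apply/eqP => x0; move/eqP: c0; apply; apply/matrixP => i j; rewrite mxE cE.
    by case: (i2 i) => -> /=.
  pose B := \matrix_(i < 2, j < 2)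
     (if i == 0 then (if j == 0 then 0 else 1) else (if j == 0 then (c 0 0)^-1 else 0)).
  pose Bi := \matrix_(i < 2, j < 2)
     (if i == 0 then (if j == 0 then 0 else c 0 0) else (if j == 0 then 1 else 0)).
  exists B; split.
    suff : B *m Bi = 1%:M by case/mulmx1_unit.
    apply/matrixP => i j; rewrite !mxE sum2 !mxE /=.
    by case: (i2 i) => ->; case: (i2 j) => -> /=; rewrite ?mulr0 ?mul0r ?add0r ?addr0 ?mulr1 ?mulVf.
  apply/matrixP => i j; rewrite !mxE sum2 !mxE /= (j1 j) x1.
  by case: (i2 i) => -> /=; rewrite ?mulr0 ?mul0r ?add0r ?addr0 ?mulr1 ?mulVf.
pose B := \matrix_(i < 2, j < 2)
   (if i == 0 then (if j == 0 then 1 else - c 0 0 / c 1 0) else (if j == 0 then 0 else (c 1 0)^-1)).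
pose Bi := \matrix_(i < 2, j < 2)
   (if i == 0 then (if j == 0 then 1 else c 0 0) else (if j == 0 then 0 else c 1 0)).
exists B; split.
  suff : B *m Bi = 1%:M by case/mulmx1_unit.
  apply/matrixP => i j; rewrite !mxE sum2 !mxE /=.
  case: (i2 i) => ->; case: (i2 j) => -> /=; rewrite ?mulr0 ?mul0r ?add0r ?addr0 ?mulr1 ?mul1r ?mulVf //.
  by rewrite divfK // subrr.
apply/matrixP => i j; rewrite !mxE sum2 !mxE /= (j1 j).
case: (i2 i) => -> /=; rewrite ?mulr0 ?mul0r ?add0r ?addr0 ?mulr1 ?mul1r ?mulVf //.
by rewrite divfK // subrr.
Qed.

Lemma ord2_cases (i : 'I_2) : i = 0 \/ i = 1.
Proof. by case: i => [[|[|?]] Hi]; [left|right|]; try apply: val_inj. Qed.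

Lemma colrow0 (K : nzRingType) m1 m2 n1 n2 (a : 'M[K]_(m1, n1)) (b : 'M[K]_(m2, n1)) :
  col_mx (row_mx a (0 : 'M_(m1, n2))) (row_mx b 0) = row_mx (col_mx a b) 0.
Proof. by rewrite -[LHS]/(block_mx a 0 b 0) block_mxEh col_mx0. Qed.

Lemma colmx_at (K : nzRingType) (a b c : 'rV[K]_3) (j : 'I_3) :
  [/\ (col_mx (col_mx a b) c : 'M_3) 0 j = a 0 j,
      (col_mx (col_mx a b) c : 'M_3) 1 j = b 0 j &
      (col_mx (col_mx a b) c : 'M_3) 2 j = c 0 j].
Proof.
split.
- rewrite (_ : (0 : 'I_3) = lshift 1 (lshift 1 (0 : 'I_1))); last by apply/eqP.
  exact: etrans (col_mxEu (col_mx a b) c _ j) (col_mxEu a b _ j).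
- rewrite (_ : (1 : 'I_3) = lshift 1 (rshift 1 (0 : 'I_1))); last by apply/eqP.
  exact: etrans (col_mxEu (col_mx a b) c _ j) (col_mxEd a b _ j).
- rewrite (_ : (2 : 'I_3) = rshift (1 + 1) (0 : 'I_1)); last by apply/eqP.
  exact: (col_mxEd (col_mx a b) c _ j).
Qed.

Lemma sub_col_l (K : fieldType) m1 m2 n (a : 'M[K]_(m1, n)) (b : 'M[K]_(m2, n)) :
  (a <= col_mx a b)%MS.
Proof. by rewrite -addsmxE addsmxSl. Qed.

Lemma sub_col_r (K : fieldType) m1 m2 n (a : 'M[K]_(m1, n)) (b : 'M[K]_(m2, n)) :
  (b <= col_mx a b)%MS.
Proof. by rewrite -addsmxE addsmxSr. Qed.

Section Main.
Variables (F : finFieldType) (L : fieldExtType F) (hL : \dim {: L} = 3%N).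
Variables (s : 'M[F]_3) (hs : singer_cycle s) (A : 'M[F]_4) (hA : in_H L s A)
  (hT : qf A (ptT F) != 0).
Local Notation phi := (in_alg L).

Lemma extLE m n (M : 'M[F]_(m, n)) : extL L M = map_mx phi M.
Proof. by apply/matrixP => i j; rewrite !mxE. Qed.

Lemma main_ML (k : nat) (l : 'M[F]_(2, 3 + 1)) :
  \rank l = 2%N -> line_on A l ->
  line_on A (l *m (block_mx (s ^+ k) 0 0 1%:M : 'M_(3 + 1))^T) ->
  \rank (l :&: l *m (block_mx (s ^+ k) 0 0 1%:M : 'M_(3 + 1))^T)%MS != 0%N.
Proof.
move=> hl on1 on2.
pose A4 : 'M[F]_(3 + 1) := A.
set Gt := (block_mx (s ^+ k) 0 0 1%:M : 'M_(3 + 1))^T.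
have GtE : Gt = block_mx (s^T ^+ k) 0 0 1%:M.
  by rewrite /Gt tr_block_mx !trmx0 trX trmx1.
have Gtu : Gt \in unitmx.
  rewrite unitmxE GtE det_lblock det1 mulr1 -unitmxE.
  exact: (tX_unit hs k).
have rlG : \rank (l *m Gt) = 2%N by rewrite mxrankMfree ?row_free_unit.
apply/negP => /eqP cap0.
have hsum : \rank (l + l *m Gt)%MS = 4%N.
  by have := mxrank_sum_cap l (l *m Gt); rewrite cap0 hl rlG addn0.
set ll := lsubmx (l : 'M_(2, 3 + 1)).
set cl := rsubmx (l : 'M_(2, 3 + 1)).
have lE : l = row_mx ll cl by rewrite hsubmxK.
have rowGt m (x : 'M[F]_(m, 3)) (c : 'M[F]_(m, 1)) :
    row_mx x c *m Gt = row_mx (x *m s^T ^+ k) c.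
  by rewrite GtE mul_row_block !mulmx0 addr0 add0r mulmx1.
have [cl0 | cl0] := eqVneq cl 0.
  have : (\rank (l + l *m Gt)%MS <= 3)%N.
    rewrite addsmxE lE cl0 rowGt colrow0 rank_row_mx0.
    exact: rank_leq_col.
  by rewrite hsum.
have [B [Bu Bc]] := normalize2 cl0.
set M2 := B *m l.
have M2E : M2 = row_mx (B *m ll) (delta_mx 1 0) by rewrite /M2 lE mul_mx_row Bc.
set p0 := row 0 (B *m ll).
set u0 := row 1 (B *m ll).
have v1E : row 0 M2 = row_mx p0 0.
  rewrite M2E row_row_mx; congr row_mx; apply/rowP => j; rewrite !mxE //.
have v2E : row 1 M2 = row_mx u0 1%:M.
  rewrite M2E row_row_mx; congr row_mx; apply/rowP => j; rewrite !mxE ord1 //.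
have M2l : (M2 :=: l)%MS by apply: eqmxMfull; rewrite row_full_unit.
have rM2 : \rank M2 = 2%N by rewrite M2l.
have p00 : p0 != 0.
  apply/negP => /eqP p0z.
  have : (M2 <= row 1 M2)%MS.
    apply/row_subP => i; case: (ord2_cases i) => ->; last exact: submx_refl.
    by rewrite v1E p0z row_mx0 sub0mx.
  move/mxrankS; rewrite rM2 => /leq_trans /(_ (rank_leq_row _)).
  by [].
set v1 := row 0 M2.
set v2 := row 1 M2.
set X := col_mx (col_mx (col_mx v1 (v1 *m Gt)) (v2 *m Gt - v2)) v2.
have v1X : (v1 <= X)%MS.
  exact: submx_trans (submx_trans (sub_col_l v1 (v1 *m Gt)) (sub_col_l _ (v2 *m Gt - v2))) (sub_col_l _ v2).
have v1GX : (v1 *m Gt <= X)%MS.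
  exact: submx_trans (submx_trans (sub_col_r v1 (v1 *m Gt)) (sub_col_l _ (v2 *m Gt - v2))) (sub_col_l _ v2).
have wX : (v2 *m Gt - v2 <= X)%MS.
  exact: submx_trans (sub_col_r (col_mx v1 (v1 *m Gt)) (v2 *m Gt - v2)) (sub_col_l _ v2).
have v2X : (v2 <= X)%MS by apply: sub_col_r.
have v2GX : (v2 *m Gt <= X)%MS.
  by rewrite -[v2 *m Gt](subrK v2) addmx_sub.
have M2X : (M2 <= X)%MS.
  by apply/row_subP => i; case: (ord2_cases i) => ->.
have hX : (l + l *m Gt <= X)%MS.
  rewrite addsmx_sub -{1}M2l M2X /=.
  have lM2 : (l <= M2)%MS by rewrite M2l.
  apply: (submx_trans (submxMr Gt lM2)).
  by apply/row_subP => i; rewrite row_mul; case: (ord2_cases i) => ->.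
have Xu : (X : 'M_4) \in unitmx.
  rewrite -row_full_unit /row_full; apply/eqP/anti_leq.
  by rewrite rank_leq_col /= -{1}hsum mxrankS.
have dX : \det (X : 'M_4) != 0 by rewrite -unitfE -unitmxE.
have [P [D [Pu hP]]] := diag_exists hL hs.
set t' := map_mx phi s^T.
have e1 : t' *m invmx P = invmx P *m diag_mx D.
  by rewrite -[LHS](mulKmx Pu) (mulmxA P) hP -(mulmxA (diag_mx D)) mulmxV // mulmx1.
have ePn n : t' ^+ n *m invmx P = invmx P *m (diag_mx D) ^+ n.
  elim: n => [|n IH]; first by rewrite !expr0 mul1mx mulmx1.
  by rewrite !exprS -!mulmxE -mulmxA IH mulmxA e1 -mulmxA.
set mk := \row_i (D 0 i ^+ k).
set Dk := diag_mx mk.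
have eP : t' ^+ k *m invmx P = invmx P *m Dk by rewrite ePn diag_mxX.
set Y := (block_mx (invmx P) 0 0 1%:M : 'M[L]_(3 + 1)).
set P' := (block_mx P 0 0 1%:M : 'M[L]_(3 + 1)).
have YP : Y *m P' = 1%:M.
  rewrite /Y /P' mulmx_block !mulmx0 !mul0mx !addr0 !add0r mulVmx // mul1mx.
  by rewrite -scalar_mx_block.
set A' := P' *m map_mx phi A4 *m P'^T.
have transf (x : 'rV[F]_(3 + 1)) : qf A x = 0 -> qf A' (map_mx phi x *m Y) = 0.
  by move=> h; rewrite /A' qf_conj -mulmxA YP mulmx1 map_qf (h : qf A4 x = 0) rmorph0.
have eig (x : 'rV[F]_3) (c : 'rV[F]_1) :
    map_mx phi (row_mx x c) *m Y = row_mx (map_mx phi x *m invmx P) (map_mx phi c).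
  by rewrite map_row_mx /Y mul_row_block !mulmx0 addr0 add0r mulmx1.
have eigG (x : 'rV[F]_3) (c : 'rV[F]_1) :
    map_mx phi (row_mx x c *m Gt) *m Y = row_mx (map_mx phi x *m invmx P *m Dk) (map_mx phi c).
  rewrite (rowGt _ x c) eig map_mxM map_tX -mulmxA eP mulmxA //.
have V1 : v1 = row_mx p0 0 := v1E.
have V2 : v2 = row_mx u0 1%:M := v2E.
have v1l : (v1 <= l)%MS by rewrite -M2l row_sub.
have v2l : (v2 <= l)%MS by rewrite -M2l row_sub.
have v12l : ((v1 + v2)%R <= l)%MS by apply: addmx_sub.
have V12 : v1 + v2 = row_mx (p0 + u0) 1%:M by rewrite V1 V2 add_row_mx add0r.
set p := map_mx phi p0 *m invmx P.
set u := map_mx phi u0 *m invmx P.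
have c1 : qf A' (row_mx p 0) = 0.
  by have := transf v1 (on1 _ v1l); rewrite V1 eig map_mx0.
have c2 : qf A' (row_mx u 1%:M) = 0.
  by have := transf v2 (on1 _ v2l); rewrite V2 eig map_mx1.
have c3 : qf A' (row_mx (p + u) 1%:M) = 0.
  by have := transf _ (on1 _ v12l); rewrite V12 eig map_mx1 map_mxD mulmxDl.
have c4 : qf A' (row_mx (p *m Dk) 0) = 0.
  by have := transf _ (on2 _ (submxMr Gt v1l)); rewrite V1 eigG map_mx0.
have c5 : qf A' (row_mx (u *m Dk) 1%:M) = 0.
  by have := transf _ (on2 _ (submxMr Gt v2l)); rewrite V2 eigG map_mx1.
have c6 : qf A' (row_mx (p *m Dk + u *m Dk) 1%:M) = 0.
  have := transf _ (on2 _ (submxMr Gt v12l)); rewrite V12 eigG map_mx1.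
  by rewrite map_mxD mulmxDl mulmxDl.
have [_ [_ hb]] := hA.
have dA (i : 'I_3) : A' (lshift 1 i) (lshift 1 i) = 0.
  rewrite /A' conj_diag.
  have -> : row (lshift 1 i) P' = row_mx (row i P) 0.
    by rewrite /P' -[block_mx _ _ _ _]/(col_mx _ _) rowKu row_row_mx row0.
  rewrite qf_row0.
  have -> : ulsubmx (map_mx phi A4) = extL L (restr_pi A).
    apply/matrixP => a b; rewrite !mxE; congr (phi (A _ _)); exact: val_inj.
  apply: hb; split.
    apply/negP => /eqP r0.
    have : delta_mx 0 i = 0 :> 'rV[L]_3.
      by rewrite -(mulmxK Pu (delta_mx 0 i)) -rowE r0 mul0mx.
    move/matrixP => /(_ 0 i); rewrite !mxE !eqxx /= => /eqP.
    by rewrite oner_eq0.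
  exists (D 0 i); rewrite extLE map_trmx -/t' -row_mul hP row_mul row_diag_mx.
  by rewrite -scalemxAl -rowE.
have d33 : A' (rshift 3 (0 : 'I_1)) (rshift 3 (0 : 'I_1)) = phi (A 3 3).
  rewrite /A' conj_diag.
  have -> : row (rshift 3 (0 : 'I_1)) P' = row_mx 0 1%:M.
    rewrite /P' -[block_mx _ _ _ _]/(col_mx _ _) rowKd row_row_mx row0.
    by congr row_mx; apply/rowP => j; rewrite !mxE ord1.
  transitivity (Q4 (map_mx phi A4) ((0 : 'rV[L]_3) 0 0) ((0 : 'rV[L]_3) 0 1)
     ((0 : 'rV[L]_3) 0 2) ((1%:M : 'M[L]_1) 0 0)); first exact: qf_rowmx.
  rewrite /Q4 /A4 !mxE /=; ring.
have a33 : qf A (ptT F) = A 3 3.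
  by rewrite qfE4 /Q4 /ptT !mxE /=; ring.
have A33 : (A' : 'M_4) 3 3 != 0.
  rewrite (_ : (3 : 'I_4) = rshift 3 (0 : 'I_1)); last by apply/eqP.
  by rewrite (d33 : (A' : 'M_4) _ _ = _) fmorph_eq0 -a33.
have h00 : (A' : 'M_4) 0 0 = 0.
  rewrite (_ : (0 : 'I_4) = lshift 1 (0 : 'I_3)); last by apply/eqP.
  exact: dA.
have h11 : (A' : 'M_4) 1 1 = 0.
  rewrite (_ : (1 : 'I_4) = lshift 1 (1 : 'I_3)); last by apply/eqP.
  exact: dA.
have h22 : (A' : 'M_4) 2 2 = 0.
  rewrite (_ : (2 : 'I_4) = lshift 1 (2 : 'I_3)); last by apply/eqP.
  exact: dA.
have pnz i : p 0 i != 0 := eig_nz hs Pu hP p00 i.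
have dk (x : 'rV[L]_3) j : (x *m Dk) 0 j = x 0 j * D 0 j ^+ k.
  by rewrite mul_mx_diag !mxE.
have XY : map_mx phi X *m Y = block_mx (col_mx (col_mx p (p *m Dk)) (u *m Dk - u)) 0 u 1%:M.
  rewrite /X !map_col_mx !mul_col_mx map_mxB mulmxBl V1 V2 !eigG !eig !map_mx0 map_mx1.
  rewrite opp_row_mx add_row_mx subrr colrow0 colrow0 //.
have dV : \det (col_mx (col_mx p (p *m Dk)) (u *m Dk - u) : 'M_3) != 0.
  have h1 : \det (block_mx (col_mx (col_mx p (p *m Dk)) (u *m Dk - u) : 'M_3) 0 u 1%:M)
      = \det (col_mx (col_mx p (p *m Dk)) (u *m Dk - u) : 'M_3) * \det (1%:M : 'M[L]_1).
    exact: det_lblock.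
  have h2 : \det ((map_mx phi X *m Y) : 'M_(3 + 1)) =
      \det (map_mx phi X : 'M_(3 + 1)) * \det Y := det_mulmx _ _.
  rewrite XY h1 det1 mulr1 in h2.
  rewrite h2 mulf_neq0 //.
    have dmX : \det (map_mx phi X : 'M_(3 + 1)) = phi (\det (X : 'M_(3 + 1))).
      exact: det_map_mx.
    by rewrite dmX fmorph_eq0.
  rewrite /Y det_lblock det1 mulr1 -unitfE -unitmxE.
  by rewrite unitmx_inv.
clearbody p u.
have z00 : (0 : 'M[L]_1) 0 0 = 0 by rewrite mxE.
have o00 : (1%:M : 'M[L]_1) 0 0 = 1 by rewrite mxE.
have addE (x y : 'rV[L]_3) j : (x + y) 0 j = x 0 j + y 0 j by rewrite mxE.
have subE (x y : 'rV[L]_3) j : (x - y) 0 j = x 0 j - y 0 j by rewrite !mxE.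
have q1 := etrans (esym (qf_rowmx (A' : 'M_4) p 0)) c1.
have q2 := etrans (esym (qf_rowmx (A' : 'M_4) u 1%:M)) c2.
have q3 := etrans (esym (qf_rowmx (A' : 'M_4) (p + u) 1%:M)) c3.
have q4 := etrans (esym (qf_rowmx (A' : 'M_4) (p *m Dk) 0)) c4.
have q5 := etrans (esym (qf_rowmx (A' : 'M_4) (u *m Dk) 1%:M)) c5.
have q6 := etrans (esym (qf_rowmx (A' : 'M_4) (p *m Dk + u *m Dk) 1%:M)) c6.
rewrite z00 in q1 q4. rewrite o00 in q2 q3 q5 q6.
rewrite !addE in q3. rewrite !dk in q4 q5. rewrite !addE !dk in q6.
have := core_id h00 h11 h22 q1 q2 q3 q4 q5 q6.
apply/eqP; rewrite !mulf_neq0 //.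
case: (colmx_at p (p *m Dk) (u *m Dk - u) 0) => a0 a1 a2.
case: (colmx_at p (p *m Dk) (u *m Dk - u) 1) => b0 b1 b2.
case: (colmx_at p (p *m Dk) (u *m Dk - u) 2) => d0 d1 d2.
move: dV; rewrite det33 a0 a1 a2 b0 b1 b2 d0 d1 d2 !dk !subE !dk //.
Qed.
End Main.


Theorem proposition3p9 (F : finFieldType) (L : fieldExtType F)
  (hL : \dim {: L} = 3%N) (s : 'M[F]_3) (hs : singer_cycle s)
  (A : 'M[F]_4) (hA : in_H L s A) (hT : qf A (ptT F) != 0)
  (R : 'I_(#|F|.+1) -> 'M[F]_(2, 4)) (hR : regulus A R) :
  forall i j : 'I_(#|F|.+1), i != j -> ~ same_C_orbit s (R i) (R j).
Proof.
move=> i j ij [k /eqmxP hk].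
case: hR => hon hskew.
have [li oi] := hon i.
have [lj oj] := hon j.
have sk := hskew i j ij.
have on2 : line_on A (R i *m (ext4 (s ^+ k))^T).
  by move=> v hv; apply: oj; rewrite -hk.
have H : \rank (R i :&: R i *m (ext4 (s ^+ k))^T)%MS != 0%N.
  exact: (main_ML hL hs hA hT li oi on2).
move: H; rewrite (cap_eqmx (eqmx_refl (R i)) hk).
by rewrite (sk : \rank (R i :&: R j)%MS = 0%N).
Qed.
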